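(* For every $i\ge 1$, the sequence $\mathcal S_{4i+2,3}$ is a valid sequence of $2i+1$ Berge $3$-moves starting from the alternating string of $n=4i+2$ pegs. Every move is legal: its source positions are occupied and its destination positions are empty at the time of the move. After the last move the configuration is sorted; more precisely: (i) the pegs occupy exactly the positions $4,5,\dots,n+3$, i.e. the string has been shifted three places to the right overall; (ii) the $\lceil n/2\rceil$ white pegs lie to the left of the $\lfloor n/2\rfloor$ black pegs.
   Context: Pegs sit in holes of a one-dimensional board whose holes are indexed by all integers; each hole holds at most one peg, and each peg is white or black. The alternating string of $n$ pegs is the configuration in which positions $1,\dots,n$ are occupied, position $i$ holding a white peg if $i$ is odd and a black peg if $i$ is even, and every other hole is empty. A Berge $3$-move $\{\,j\ i\,\}$ is allowed when positions $i,i+1,i+2$ are occupied and positions $j,j+1,j+2$ are empty. It moves the peg in position $i+t$ to position $j+t$ for $t=0,1,2$. A sequence is written as a list of integers $\{a_1\ a_2\ \dots\ a_m\}$, which denotes the moves $\{a_1\ a_2\},\{a_2\ a_3\},\dots,\{a_{m-1}\ a_m\}$ performed in this order. Concatenation of two such lists with $\cup$ means performing the first list of moves and then the second. The sequences $\mathcal S_{4i+2,3}$ are defined recursively. - $\mathcal S_{6,3}=\{7\ 2\ 6\ 1\}$, i.e. the moves $\{7\ 2\},\{2\ 6\},\{6\ 1\}$. - For $i\ge 2$, let $\mathcal S_{4i-2,3}=\{a_1\ \dots\ a_{2i}\}$ and define $\phi(x)=x+2$ if $x\le 2i$ and $\phi(x)=x+4$ if $x\ge 2i+1$. Then $\mathcal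 S_{4i+2,3}=\{\phi(a_1)\ \phi(a_2)\ \dots\ \phi(a_{2i})\}\cup\{3\ \ 2i+4\ \ 1\}$. For example, $\mathcal S_{10,3}=\{11\ 4\ 10\ 3\ 8\ 1\}$ and $\mathcal S_{14,3}=\{15\ 6\ 14\ 5\ 12\ 3\ 10\ 1\}$. *)

(* Defs.v *)
From Stdlib Require Import ZArith List Lia Bool.
Import ListNotations.
Open Scope Z_scope.
Open Scope bool_scope.

Inductive color := White | Black.

Definition config := Z -> option color.

Definition alternating (n : Z) : config :=
  fun p => if (1 <=? p) && (p <=? n) then
             Some (if Z.odd p then White else Black)
           else None.

Definition move_legal (c : config) (j i : Z) : Prop :=
  (forall t, 0 <= t <= 2 -> c (i + t) <> None) /\
  (forall t, 0 <= t <= 2 -> c (j + t) = None).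

Definition apply_move (c : config) (j i : Z) : config :=
  fun p => if (j <=? p) && (p <=? j + 2) then c (p - j + i)
           else if (i <=? p) && (p <=? i + 2) then None
           else c p.

(* The list {a1 a2 ... am} denotes the moves {a1 a2},{a2 a3},...,{a_{m-1} a_m}. *)
Fixpoint moves_of (l : list Z) : list (Z * Z) :=
  match l with
  | a :: ((b :: _) as t) => (a, b) :: moves_of t
  | _ => []
  end.

Fixpoint exec (c : config) (ms : list (Z * Z)) : config :=
  match ms with
  | [] => c
  | (j, i) :: ms' => exec (apply_move c j i) ms'
  end.

(* phi for the step from S_{4i-2,3} to S_{4i+2,3}. *)
Definition phi (i : Z) (x : Z) : Z := if x <=? 2 * i then x + 2 else x + 4.

(* Concatenation ∪ of two lists whose moves are performed one after the other:
   when the first list ends with the entry the second starts with (here 3),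
   the resulting list is l1 followed by the tail of l2, so that
   moves_of (cup l1 l2) = moves_of l1 ++ moves_of l2. *)
Definition cup (l1 l2 : list Z) : list Z := l1 ++ tl l2.

(* Sseq k = S_{4k+2,3} for k >= 1 (Sseq 0 is a dummy value equal to S_{6,3}). *)
Fixpoint Sseq (k : nat) : list Z :=
  match k with
  | O => [7; 2; 6; 1]
  | S O => [7; 2; 6; 1]
  | S k' =>
      let i := Z.of_nat k in
      cup (map (phi i) (Sseq k')) [3; 2 * i + 4; 1]
  end.

(* Main.v *)
Require Import Defs.
From Stdlib Require Import ZArith List Lia Bool FunctionalExtensionality.
Import ListNotations.
Open Scope Z_scope.

Definition altc (p : Z) : color := if Z.odd p then White else Black.

Definition inr (a p b : Z) : bool := (a <=? p) && (p <=? b).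

Definition Sf (k m : Z) : config := fun p =>
  if (1 <=? p) && (p <=? 2*k+2-2*m) then Some (if Z.odd p then White else Black)
  else if (2*k+3-2*m <=? p) && (p <=? 2*k+3-2*m) then Some Black
  else if (2*k+4-2*m <=? p) && (p <=? 2*k+3) then Some White
  else if (2*k+4 <=? p) && (p <=? 4*k+3-2*m) then Some (if Z.odd p then White else Black)
  else if (4*k+7-2*m <=? p) && (p <=? 4*k+5) then Some Black
  else None.

Definition Tf (k m : Z) : config := fun p =>
  if (1 <=? p) && (p <=? 2*k-2*m) then Some (if Z.odd p then White else Black)
  else if (2*k+4-2*m <=? p) && (p <=? 2*k+3) then Some White
  else if (2*k+4 <=? p) && (p <=? 4*k+3-2*m) then Some (if Z.odd p then White else Black)
  else if (4*k+4-2*m <=? p) && (p <=? 4*k+4-2*m) then Some White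
  else if (4*k+5-2*m <=? p) && (p <=? 4*k+5) then Some Black
  else None.

Ltac dest1 :=
  match goal with
  | |- context [ (?x <=? ?y) ] =>
      let H := fresh "H" in destruct (x <=? y) eqn:H;
      [apply Z.leb_le in H | apply Z.leb_gt in H]; cbn [andb]
  | |- context [ Z.odd ?e ] =>
      let H := fresh "H" in let Hd := fresh "Hd" in
      pose proof (Z.div2_odd e) as Hd;
      destruct (Z.odd e) eqn:H; try rewrite H in Hd; cbn [Z.b2z] in Hd
  end.

Ltac crush := repeat (dest1; try (exfalso; lia)); try reflexivity; try discriminate; try (exfalso; lia).

Ltac fin := try (intros; lia); try (intros; discriminate);
  try (let H := fresh in intros H; exfalso; apply H; reflexivity);
  try (intros; split; [discriminate|lia]).

Lemma step1 k m : 1 <= m <= k ->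
  move_legal (Sf k m) (4*k+4-2*m) (2*k+1-2*m) /\
  apply_move (Sf k m) (4*k+4-2*m) (2*k+1-2*m) = Tf k m.
Proof.
  intros Hm; split; [split; intros t Ht|].
  - unfold Sf; crush.
  - unfold Sf; crush.
  - apply functional_extensionality; intro p; unfold apply_move, Sf, Tf; crush.
Qed.

Lemma step2 k m : 1 <= m < k ->
  move_legal (Tf k m) (2*k+1-2*m) (4*k+4-2*(m+1)) /\
  apply_move (Tf k m) (2*k+1-2*m) (4*k+4-2*(m+1)) = Sf k (m+1).
Proof.
  intros Hm; split; [split; intros t Ht|].
  - unfold Tf; crush.
  - unfold Tf; crush.
  - apply functional_extensionality; intro p; unfold apply_move, Sf, Tf; crush.
Qed.

Lemma init1 k : 1 <= k ->
  move_legal (alternating (4*k+2)) (4*k+3) (2*k) /\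
  move_legal (apply_move (alternating (4*k+2)) (4*k+3) (2*k)) (2*k) (4*k+4-2*1) /\
  apply_move (apply_move (alternating (4*k+2)) (4*k+3) (2*k)) (2*k) (4*k+4-2*1) = Sf k 1.
Proof.
  intros Hk; split; [|split]; [split; intros t Ht..|].
  - unfold alternating; crush.
  - unfold alternating; crush.
  - unfold apply_move, alternating; crush.
  - unfold apply_move, alternating; crush.
  - apply functional_extensionality; intro p; unfold apply_move, Sf, alternating; crush.
Qed.

Inductive run : config -> list (Z*Z) -> config -> Prop :=
| run_nil c : run c [] c
| run_cons c j i ms c' : move_legal c j i -> run (apply_move c j i) ms c' ->
    run c ((j,i)::ms) c'.

Lemma run_exec c ms c' : run c ms c' ->
  exec c ms = c' /\
  (forall k : nat, (k < length ms)%nat ->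
     move_legal (exec c (firstn k ms)) (fst (nth k ms (0, 0))) (snd (nth k ms (0, 0)))).
Proof.
  induction 1 as [c|c j i ms c' Hl Hr [IH1 IH2]]; split; simpl; auto.
  - intros k Hk; lia.
  - intros [|k] Hk; simpl; auto. apply IH2; simpl in Hk; lia.
Qed.

Fixpoint EL (K m : Z) (r : nat) : list Z :=
  match r with
  | O => [4*K+4-2*m; 2*K+1-2*m]
  | S r' => 4*K+4-2*m :: 2*K+1-2*m :: EL K (m+1) r'
  end.

Fixpoint LM (K m : Z) (r : nat) : list (Z*Z) :=
  match r with
  | O => [(4*K+4-2*m, 2*K+1-2*m)]
  | S r' => (4*K+4-2*m, 2*K+1-2*m) :: (2*K+1-2*m, 4*K+4-2*(m+1)) :: LM K (m+1) r'
  end.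

Lemma moves_EL K r : forall m, moves_of (EL K m r) = LM K m r.
Proof.
  induction r as [|r IH]; intros m; simpl; auto.
  rewrite <- IH. destruct r; reflexivity.
Qed.

Lemma LM_len K r : forall m, length (LM K m r) = (2 * r + 1)%nat.
Proof. induction r as [|r IH]; intros m; simpl; auto. rewrite IH; lia. Qed.

Lemma run_LM K r : forall m, 1 <= m -> m + Z.of_nat r = K ->
  run (Sf K m) (LM K m r) (Tf K K).
Proof.
  induction r as [|r IH]; intros m Hm Hr; cbn [LM].
  - assert (m = K) by lia. subst m.
    destruct (step1 K K) as [H1 H2]; [lia|].
    econstructor; [exact H1|]. rewrite H2. constructor.
  - destruct (step1 K m) as [H1 H2]; [lia|].
    destruct (step2 K m) as [H3 H4]; [lia|].
    econstructor; [exact H1|]. rewrite H2.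
    econstructor; [exact H3|]. rewrite H4.
    apply IH; lia.
Qed.

Lemma EL_phi K r : forall m, 1 <= m -> m + Z.of_nat r = K ->
  map (phi (K+1)) (EL K m r) ++ [2*(K+1)+4; 1] = EL (K+1) m (S r).
Proof.
  induction r as [|r IH]; intros m Hm Hr.
  - cbn [EL map app]. unfold phi.
    destruct (4 * K + 4 - 2 * m <=? 2 * (K + 1)) eqn:E1; [apply Z.leb_le in E1; lia|].
    destruct (2 * K + 1 - 2 * m <=? 2 * (K + 1)) eqn:E2; [|apply Z.leb_gt in E2; lia].
    repeat (apply f_equal2; [lia|]); reflexivity.
  - change (EL K m (S r)) with (4*K+4-2*m :: 2*K+1-2*m :: EL K (m+1) r).
    cbn [map]. rewrite <- !app_comm_cons. rewrite IH by lia.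
    change (EL (K+1) m (S (S r))) with
      (4*(K+1)+4-2*m :: 2*(K+1)+1-2*m :: EL (K+1) (m+1) (S r)).
    unfold phi.
    destruct (4 * K + 4 - 2 * m <=? 2 * (K + 1)) eqn:E1; [apply Z.leb_le in E1; lia|].
    destruct (2 * K + 1 - 2 * m <=? 2 * (K + 1)) eqn:E2; [|apply Z.leb_gt in E2; lia].
    repeat (apply f_equal2; [lia|]); reflexivity.
Qed.

Lemma Sseq_eq i' :
  Sseq (S i') = 4*Z.of_nat (S i')+3 :: 2*Z.of_nat (S i') :: EL (Z.of_nat (S i')) 1 i'.
Proof.
  induction i' as [|i' IH].
  - reflexivity.
  - change (Sseq (S (S i'))) with
      (cup (map (phi (Z.of_nat (S (S i')))) (Sseq (S i'))) [3; 2 * Z.of_nat (S (S i')) + 4; 1]).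
    rewrite IH. unfold cup. cbn [tl].
    rewrite (Nat2Z.inj_succ (S i')). unfold Z.succ.
    set (K := Z.of_nat (S i')).
    cbn [map]. rewrite <- !app_comm_cons. rewrite EL_phi by (subst K; lia).
    unfold phi.
    destruct (4 * K + 3 <=? 2 * (K+1)) eqn:E1; [apply Z.leb_le in E1; subst K; lia|].
    destruct (2 * K <=? 2 * (K+1)) eqn:E2; [|apply Z.leb_gt in E2; lia].
    repeat (apply f_equal2; [lia|]); reflexivity.
Qed.

Lemma ms_eq a b K m r :
  moves_of (a :: b :: EL K m r) = (a,b) :: (b, 4*K+4-2*m) :: LM K m r.
Proof. rewrite <- moves_EL. destruct r; reflexivity. Qed.

Theorem lemma3 (i : nat) (hi : (1 <= i)%nat) :
  let n := 4 * Z.of_nat i + 2 in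
  let ms := moves_of (Sseq i) in
  let final := exec (alternating n) ms in
  (* exactly 2i+1 moves *)
  length ms = (2 * i + 1)%nat /\
  (* every move is legal at the time it is performed *)
  (forall k : nat, (k < length ms)%nat ->
     move_legal (exec (alternating n) (firstn k ms))
                (fst (nth k ms (0, 0))) (snd (nth k ms (0, 0)))) /\
  (* (i) the pegs occupy exactly positions 4, ..., n+3 *)
  (forall p : Z, final p <> None <-> 4 <= p <= n + 3) /\
  (* (ii) the ceil(n/2) white pegs lie left of the floor(n/2) black pegs *)
  (forall p : Z, final p = Some White <-> 4 <= p <= 4 + (n + 1) / 2 - 1) /\
  (forall p : Z, final p = Some Black <-> 4 + (n + 1) / 2 <= p <= n + 3).
Proof.
  destruct i as [|i']; [lia|].
  cbv zeta.
  rewrite Sseq_eq, ms_eq.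
  set (K := Z.of_nat (S i')).
  assert (HK : 1 <= K) by (subst K; lia).
  assert (Hrun : run (alternating (4*K+2))
     ((4 * K + 3, 2 * K) :: (2 * K, 4 * K + 4 - 2 * 1) :: LM K 1 i') (Tf K K)).
  { destruct (init1 K HK) as [H1 [H2 H3]].
    econstructor; [exact H1|]. econstructor; [exact H2|]. rewrite H3.
    apply run_LM; subst K; lia. }
  destruct (run_exec _ _ _ Hrun) as [E1 E2].
  rewrite E1.
  assert (Hd : (4 * K + 2 + 1) / 2 = 2 * K + 1).
  { replace (4 * K + 2 + 1) with (1 + (2*K+1)*2) by ring.
    rewrite Z.div_add by lia. reflexivity. }
  rewrite Hd.
  split; [|split; [exact E2|]].
  { cbn [length]. rewrite LM_len. lia. }
  split; [|split]; intro p; unfold Tf.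
  - split; [intro H|intros [Ha Hb]]; revert H || idtac; crush; fin.
  - split; [intro H|intros [Ha Hb]]; revert H || idtac; crush; fin.
  - split; [intro H|intros [Ha Hb]]; revert H || idtac; crush; fin.
Qed.
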